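(* The fixed point set $\mathrm{Fix}\,R=\{x\in[0,1]:R(x)=x\}$ is an uncountable subset of $[0,1]\setminus\mathscr D$, and its closure $\overline{\mathrm{Fix}\,R}$ is a Cantor set of Lebesgue measure zero with $\overline{\mathrm{Fix}\,R}\setminus\mathrm{Fix}\,R\subset\mathscr D$.
   Context: Define $\rho$ on binary words: for $b=b_1b_2\dots$, $\rho(b)$ is obtained by deleting every digit $b_n=0$ and replacing every $b_n=1$ by $0$ if $n$ is odd and by $1$ if $n$ is even. For $x\in(0,1]$ let $\beta(x)$ be the unique binary expansion of $x$ with infinitely many $1$'s. Define $R:[0,1]\to[0,1]$ by $R(0)=2/3$ and, for $x\in(0,1]$, $R(x)=\sum_{n\ge1}c_n2^{-n}$ where $c=\rho(\beta(x))$. $\mathscr D$ is the set of dyadic rationals in $[0,1]$. *)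

(* Defs.v *)
From HB Require Import structures.
From mathcomp Require Import all_boot all_order all_algebra.
From mathcomp Require Import all_classical all_reals all_analysis.
Set Implicit Arguments. Unset Strict Implicit. Unset Printing Implicit Defensive.
Import Order.TTheory GRing.Theory Num.Theory.
Import numFieldNormedType.Exports.
Local Open Scope classical_set_scope.
Local Open Scope ring_scope.

(* Infinite binary words b = b_1 b_2 ... are represented 0-indexed:
   (w : nat -> bool) with w n = b_{n+1}. *)

Definition count_ones (w : nat -> bool) (n : nat) : nat :=
  (\sum_(i < n) (w i : nat))%N.

(* (0-indexed) position of the (k+1)-th digit 1 of w (well defined when w
   has infinitely many 1's; default 0 otherwise) *)
Definition pos_one (w : nat -> bool) (k : nat) : nat :=
  xget 0%N [set n | w n = true /\ count_ones w n = k].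

(* rho(w): delete the 0's and replace each 1 at (1-indexed) position m by
   0 if m is odd and by 1 if m is even.  The k-th (0-indexed) letter of
   rho(w) comes from the 1 at 0-indexed position pos_one w k, i.e. 1-indexed
   position (pos_one w k).+1, which is even iff pos_one w k is odd.
   (For words with infinitely many 1's, rho(w) is again infinite.) *)
Definition rho (w : nat -> bool) : nat -> bool := fun k => odd (pos_one w k).

Definition is_bin_exp {R : realType} (x : R) (w : nat -> bool) : Prop :=
  (fun n => \sum_(k < n) ((w k)%:R / 2 ^+ k.+1 : R)) @ \oo --> x.

Definition infinitely_many_ones (w : nat -> bool) : Prop :=
  forall N, exists2 n, (N <= n)%N & w n = true.

Definition beta {R : realType} (x : R) : nat -> bool :=
  xget (fun _ => false) [set w | is_bin_exp x w /\ infinitely_many_ones w].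

Definition bin_val {R : realType} (c : nat -> bool) : R :=
  limn (fun N => \sum_(n < N) ((c n)%:R / 2 ^+ n.+1 : R)).

Definition Rmap {R : realType} (x : R) : R :=
  if x == 0 then 2 / 3 else bin_val (rho (beta x)).

Definition dyadics {R : realType} : set R :=
  [set x | exists (k n : nat), x = k%:R / 2 ^+ n /\ 0 <= x <= 1].

Definition FixR {R : realType} : set R :=
  [set x | 0 <= x <= 1 /\ Rmap x = x].

Definition cantor_set {T : topologicalType} (A : set T) : Prop :=
  [/\ A !=set0, compact A, perfect_set A & totally_disconnected A].

(* Main.v *)
Require Import Defs.
From HB Require Import structures.
From mathcomp Require Import all_boot all_order all_algebra.
From mathcomp Require Import all_classical all_reals all_analysis.
From mathcomp Require Import lra zify.
From mathcomp Require Import measurable_realfun.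
Import Order.TTheory GRing.Theory Num.Theory.
Import numFieldNormedType.Exports.
Local Open Scope classical_set_scope.
Local Open Scope ring_scope.

Unset Printing Implicit Defensive.

Section Basic.
Variable R : realType.

Definition ps (w : nat -> bool) (n : nat) : R :=
  \sum_(k < n) ((w k)%:R / 2 ^+ k.+1 : R).

Definition ee (n : nat) : R := (2 ^+ n)^-1.

Lemma ee_gt0 n : 0 < ee n.
Proof. by rewrite /ee invr_gt0 exprn_gt0. Qed.

Lemma eeS n : ee n.+1 = ee n / 2.
Proof. by rewrite /ee exprS invfM mulrC. Qed.

Lemma ee0 : ee 0 = 1.
Proof. by rewrite /ee expr0 invr1. Qed.

Lemma psS w n : ps w n.+1 = ps w n + (w n)%:R * ee n.+1.
Proof. by rewrite /ps big_ord_recr. Qed.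

Lemma ps0 w : ps w 0 = 0.
Proof. by rewrite /ps big_ord0. Qed.

Lemma ps_tail w n m : (n <= m)%N -> ps w n <= ps w m <= ps w n + ee n - ee m.
Proof.
elim: m => [|m IH]; first by rewrite leqn0 => /eqP ->; rewrite addrK lexx.
rewrite leq_eqVlt => /orP [/eqP <-|]; first by rewrite addrK !lexx.
rewrite ltnS => /IH /andP [h1 h2]; rewrite psS.
have e1 := ee_gt0 m.+1; have e2 : ee m = ee m.+1 * 2 by rewrite eeS divfK.
case: (w m) => /=; rewrite ?mul1r ?mul0r ?addr0; apply/andP; split.
- by apply: (le_trans h1); rewrite lerDl ltW.
- by move: h2; rewrite e2; lra.
- exact: h1.
- by move: h2; rewrite e2; lra.
Qed.

Lemma ps_nd w : nondecreasing_seq (ps w).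
Proof. by move=> n m nm; case/andP: (ps_tail w n m nm). Qed.

Lemma ps_ge0 w n : 0 <= ps w n.
Proof. by rewrite -(ps0 w); case/andP: (ps_tail w 0 n (leq0n n)). Qed.

Lemma ps_le1 w n : ps w n <= 1 - ee n.
Proof. by case/andP: (ps_tail w 0 n (leq0n n)) => _; rewrite ps0 ee0 add0r. Qed.

Lemma ps_cvg w : cvgn (ps w).
Proof.
apply: nondecreasing_is_cvgn; first exact: ps_nd.
exists 1 => _ [n _ <-]; apply: (le_trans (ps_le1 w n)).
by rewrite lerBlDr lerDl ltW ?ee_gt0.
Qed.

Lemma bin_valE w : bin_val w = limn (ps w).
Proof. by []. Qed.

Lemma bin_val_ge w n : ps w n <= bin_val w.
Proof. by rewrite bin_valE; apply: nondecreasing_cvgn_le; [exact: ps_nd|exact: ps_cvg]. Qed.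

Lemma bin_val_le w n : bin_val w <= ps w n + ee n.
Proof.
apply: limr_le; first exact: ps_cvg.
near=> m; have nm : (n <= m)%N by near: m; exact: nbhs_infty_ge.
case/andP: (ps_tail w n m nm) => _ h; apply: (le_trans h).
by rewrite lerBlDr lerDl ltW ?ee_gt0.
Unshelve. all: by end_near. Qed.

Lemma bin_val_le_zero w n j : (n <= j)%N -> w j = false ->
  bin_val w <= ps w n + ee n - ee j.+1.
Proof.
move=> nj wj; apply: (le_trans (bin_val_le w j.+1)).
rewrite psS wj mul0r addr0.
case/andP: (ps_tail w n j nj) => _ h.
have e2 : ee j = ee j.+1 * 2 by rewrite eeS divfK.
by move: h; rewrite e2; lra.
Qed.

Lemma bin_val_gt_one w n j : (n <= j)%N -> w j = true ->
  ps w n + ee j.+1 <= bin_val w.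
Proof.
move=> nj wj; apply: le_trans (bin_val_ge w j.+1).
rewrite psS wj mul1r lerD2r.
by case/andP: (ps_tail w n j nj).
Qed.

Lemma bin_val_is_bin_exp w : is_bin_exp (bin_val w : R) w.
Proof. exact: ps_cvg. Qed.

Lemma is_bin_expE (x : R) w : is_bin_exp x w -> x = bin_val w.
Proof. by move=> h; rewrite /bin_val (cvg_lim _ h). Qed.

End Basic.

Implicit Types (w u v b : nat -> bool).

Lemma cnt0 w : count_ones w 0 = 0%N.
Proof. by rewrite /count_ones big_ord0. Qed.

Lemma cntS w n : count_ones w n.+1 = (count_ones w n + w n)%N.
Proof. by rewrite /count_ones big_ord_recr. Qed.

Lemma cnt_mono w m n : (m <= n)%N -> (count_ones w m <= count_ones w n)%N.
Proof.
elim: n => [|n IH]; first by rewrite leqn0 => /eqP ->.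
rewrite leq_eqVlt => /orP [/eqP ->//|]; rewrite ltnS => /IH h.
by rewrite cntS (leq_trans h) ?leq_addr.
Qed.

Lemma cnt_le w n : (count_ones w n <= n)%N.
Proof.
elim: n => [|n IH]; first by rewrite cnt0.
by rewrite cntS; case: (w n) => /=; lia.
Qed.

Lemma cnt_lt {w j n} : (j < n)%N -> w j -> (count_ones w j < count_ones w n)%N.
Proof.
move=> jn wj; apply: (@leq_trans (count_ones w j.+1)); last exact: cnt_mono.
by rewrite cntS wj addn1.
Qed.

Lemma eq_cnt {u v n} : (forall k, (k < n)%N -> u k = v k) ->
  count_ones u n = count_ones v n.
Proof. by move=> h; apply: eq_bigr => i _; rewrite h. Qed.

Lemma cnt_lt_self w n : w 0%N = false -> (0 < n)%N -> (count_ones w n < n)%N.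
Proof.
move=> w0; case: n => // n _; elim: n => [|n IH]; first by rewrite cntS cnt0 w0.
rewrite cntS; move: IH; case: (w _) => /=; lia.
Qed.

Lemma count_unbounded w : infinitely_many_ones w ->
  forall k, exists n, (k < count_ones w n)%N.
Proof.
move=> hw; elim=> [|k [n hn]].
  have [n _ wn] := hw 0%N; exists n.+1; by rewrite cntS wn addn1.
have [m nm wm] := hw n; exists m.+1; rewrite cntS wm.
have := @cnt_mono w _ _ nm; lia.
Qed.

Lemma pos_one_spec w k : infinitely_many_ones w ->
  w (pos_one w k) = true /\ count_ones w (pos_one w k) = k.
Proof.
move=> hw; rewrite /pos_one.
suff hex : exists n, w n = true /\ count_ones w n = k.
  by case: xgetP => [n -> h|hN] //; case: hex => n /hN.
have ex : exists n, (k < count_ones w n)%N by exact: count_unbounded.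
case: (ex_minnP ex) => N hN hmin.
case: N hN hmin => [|M]; first by rewrite cnt0.
rewrite cntS => hM hmin.
have hle : (count_ones w M <= k)%N by rewrite leqNgt; apply/negP => /hmin; rewrite ltnn.
exists M; move: hM hle; case: (w M) => /=; rewrite ?addn1 ?addn0 ?ltnS.
  by move=> h1 h2; split => //; apply/eqP; rewrite eqn_leq h1 h2.
by move=> h1 h2; move: (leq_ltn_trans h2 h1); rewrite ltnn.
Qed.

Lemma pos_one_eq {w k j} : infinitely_many_ones w -> w j = true ->
  count_ones w j = k -> pos_one w k = j.
Proof.
move=> hw wj cj; have [pw pc] := pos_one_spec _ k hw.
case: (ltngtP (pos_one w k) j) => // h.
- by move: (cnt_lt h pw); rewrite pc cj ltnn.
- by move: (cnt_lt h wj); rewrite pc cj ltnn.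
Qed.

Definition okw (w : nat -> bool) := forall j, w j -> odd j = w (count_ones w j).

Definition Wset : set (nat -> bool) := [set w | infinitely_many_ones w /\ okw w].

Lemma rho_fixE {w} : infinitely_many_ones w -> (rho w = w <-> okw w).
Proof.
move=> hw; split.
  move=> rw j wj; have := congr1 (fun f => f (count_ones w j)) rw.
  by rewrite /rho (pos_one_eq hw wj erefl) => <-.
move=> ok; apply/funext => k; have [pw pc] := pos_one_spec _ k hw.
by rewrite /rho (ok _ pw) pc.
Qed.

Lemma first_diff (u v : nat -> bool) : u <> v ->
  exists n, u n <> v n /\ forall k, (k < n)%N -> u k = v k.
Proof.
move=> uv; have ex : exists n, u n != v n.
  apply: contrapT => h; apply: uv; apply/funext => n.
  by apply/eqP; apply: contrapT => h2; apply: h; exists n; apply/negP.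
case: (ex_minnP ex) => n /eqP hn hmin; exists n; split => // k kn.
by apply/eqP; apply: contrapT => /negP h; move: (hmin k h); rewrite leqNgt kn.
Qed.

Section Vals.
Variable R : realType.

Lemma ps_eq {u v n} : (forall k, (k < n)%N -> u k = v k) -> ps R u n = ps R v n.
Proof. by move=> h; apply: eq_bigr => i _; rewrite h. Qed.

Lemma diff_val {u v : nat -> bool} {n} : u n = false -> v n = true ->
  (forall k, (k < n)%N -> u k = v k) -> bin_val u = bin_val v :> R ->
  (forall j, (n < j)%N -> u j = true) /\ (forall j, (n < j)%N -> v j = false).
Proof.
move=> un vn agr eqv.
have pe : ps R u n = ps R v n by exact: ps_eq.
have hu : bin_val u <= ps R u n + ee R n.+1.
  by have := bin_val_le R u n.+1; rewrite psS un mul0r addr0.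
have hv : ps R v n + ee R n.+1 <= bin_val v by exact: (bin_val_gt_one R v n n (leqnn n) vn).
split => j nj.
  case uj: (u j) => //; exfalso.
  have := bin_val_le_zero R u n.+1 j nj uj; rewrite psS un mul0r addr0.
  have := ee_gt0 R j.+1; move: hu hv; rewrite eqv pe; lra.
case vj: (v j) => //; exfalso.
have := bin_val_gt_one R v n.+1 j nj vj; rewrite psS vn mul1r.
have := ee_gt0 R j.+1; move: hu hv; rewrite eqv pe; lra.
Qed.

Lemma bin_val_inj (u v : nat -> bool) : infinitely_many_ones u ->
  infinitely_many_ones v -> bin_val u = bin_val v :> R -> u = v.
Proof.
move=> hu hv eqv; apply: contrapT => /first_diff [n [dn agr]].
case Eu: (u n); case Ev: (v n); rewrite ?Eu ?Ev in dn => //.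
- have agr' : forall k, (k < n)%N -> v k = u k by move=> k kn; rewrite agr.
  have [_ h] := diff_val Ev Eu agr' (esym eqv).
  by have [j nj uj] := hu n.+1; rewrite h in uj.
- have [_ h] := diff_val Eu Ev agr eqv.
  by have [j nj vj] := hv n.+1; rewrite h in vj.
Qed.

Lemma bin_val_gt0 {w} : infinitely_many_ones w -> 0 < (bin_val w : R).
Proof.
move=> hw; have [j _ wj] := hw 0%N.
have := bin_val_gt_one R w 0 j (leq0n j) wj; rewrite ps0 add0r.
by apply: lt_le_trans; exact: ee_gt0.
Qed.

Lemma bin_val_01 w : 0 <= (bin_val w : R) <= 1.
Proof.
apply/andP; split; first by apply: le_trans (bin_val_ge R w 0); rewrite ps0.
by have := bin_val_le R w 0; rewrite ps0 add0r ee0.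
Qed.

Lemma beta_bin_val {w} : infinitely_many_ones w -> beta (bin_val w : R) = w.
Proof.
move=> hw; rewrite /beta; apply: xget_unique.
  by split => //; exact: bin_val_is_bin_exp.
by move=> v [/is_bin_expE hv hv2]; apply: bin_val_inj.
Qed.

Lemma rho_alt {b : nat -> bool} {n} : infinitely_many_ones b ->
  (forall j, (n < j)%N -> b j = true) -> infinitely_many_ones (rho b).
Proof.
move=> hb hn N; set k0 := count_ones b n.+1.
have ct t : count_ones b (n.+1 + t) = (k0 + t)%N.
  elim: t => [|t IH]; first by rewrite !addn0.
  by rewrite addnS cntS IH hn ?addn1 ?addnS // ltnS leq_addr.
have rt t : rho b (k0 + t) = odd (n.+1 + t).
  by rewrite /rho (pos_one_eq hb _ (ct t)) // hn // ltnS leq_addr.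
case Ho: (odd (n.+1 + N)).
  by exists (k0 + N)%N; rewrite ?leq_addl // rt.
exists (k0 + N.+1)%N; first by rewrite -addSnnS leq_addl.
by rewrite rt addnS oddS Ho.
Qed.

Lemma FixRE : @FixR R = bin_val @` Wset.
Proof.
apply/seteqP; split => x.
- move=> [x01 rx].
  have x0 : x != 0 by apply/negP => /eqP x0; move: rx; rewrite /Rmap x0 eqxx; lra.
  move: rx; rewrite /Rmap (negbTE x0) /beta.
  case: xgetP => [b _ [hb1 hb2]|hN].
    set c := rho b => hc.
    have xb := is_bin_expE R x b hb1.
    have cb : c = b.
      apply: contrapT => /first_diff [n [dn agr]].
      case Eb: (b n); case Ec: (c n); rewrite ?Eb ?Ec in dn => //.
      + have [_ h] := diff_val Ec Eb agr (etrans hc xb).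
        by have [j nj bj] := hb2 n.+1; rewrite h in bj.
      + have agr' : forall k, (k < n)%N -> b k = c k by move=> k kn; rewrite agr.
        have [h1 h2] := diff_val Eb Ec agr' (esym (etrans hc xb)).
        have [j nj cj] := rho_alt hb2 h1 n.+1.
        by move: (h2 j nj); rewrite /c cj.
    exists b; last by rewrite xb.
    by split => //; apply/rho_fixE.
  have -> : rho (fun _ : nat => false) = (fun _ => false).
    apply/funext => k; rewrite /rho /pos_one xgetPN //.
    by move=> n [].
  move=> h.
  have h0 : bin_val (fun _ : nat => false) = 0 :> R.
    rewrite /bin_val.
    have -> : (fun N => \sum_(n < N) (((fun _ : nat => false) n)%:R / 2 ^+ n.+1 : R))
       = fun _ => 0.
      by apply/funext => N; rewrite big1 // => i _; rewrite mul0r.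
    exact: lim_cst.
  by move: x0; rewrite -h h0 eqxx.
- move=> [w [hw ok] <-]; split; first exact: bin_val_01.
  rewrite /Rmap (gt_eqF (bin_val_gt0 hw)) beta_bin_val //.
  by move/(rho_fixE hw): ok => ->.
Qed.

End Vals.

Fixpoint gf u n (sk : nat -> bool) (j : nat) : nat -> bool :=
  match j with
  | 0%N => u
  | j'.+1 => let f := gf u n sk j' in
      fun i => if i == j' then
        (if (j' < n)%N then u j' else if sk j' then false
         else odd j' == f (count_ones f j'))
      else f i
  end.

Definition gen u n sk (j : nat) : bool := gf u n sk j.+1 j.

Lemma gf_stable {u n sk k j i} : (i < j)%N -> (j <= k)%N -> gf u n sk k i = gf u n sk j i.
Proof.
move=> ij; elim: k => [|k IH]; first by rewrite leqn0 => /eqP ->.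
rewrite leq_eqVlt => /orP [/eqP ->//|]; rewrite ltnS => jk.
rewrite /= ifF ?IH //; apply/negbTE; rewrite neq_ltn; apply/orP; left.
exact: leq_trans ij jk.
Qed.

Lemma gen_gf {u n sk k j} : (j < k)%N -> gen u n sk j = gf u n sk k j.
Proof. by move=> jk; rewrite /gen (gf_stable (ltnSn j) jk). Qed.

Lemma gf_agree {u n sk j i} : (i < j)%N -> gf u n sk j i = gen u n sk i.
Proof. by move=> ij; rewrite (gen_gf ij). Qed.

Lemma gen_lt u n sk j : (j < n)%N -> gen u n sk j = u j.
Proof. by move=> jn; rewrite /gen /= eqxx jn. Qed.

Lemma count_gen_gf u n sk j :
  count_ones (gf u n sk j) j = count_ones (gen u n sk) j.
Proof. by apply: eq_cnt => k kj; rewrite gf_agree. Qed.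

Lemma gen_ge u n sk j : (n <= j)%N ->
  (count_ones (gen u n sk) j < j)%N ->
  gen u n sk j = if sk j then false else odd j == gen u n sk (count_ones (gen u n sk) j).
Proof.
move=> nj cj; rewrite /gen /= eqxx ltnNge nj /= count_gen_gf.
by rewrite gf_agree.
Qed.

Definition okn u n := forall j, (j < n)%N -> u j -> odd j = u (count_ones u j).

Lemma okw_w0 w : okw w -> w 0%N = false.
Proof. by move=> ok; case E: (w 0%N) => //; move: (ok 0%N E); rewrite cnt0 E. Qed.

Lemma okw_okn w n : okw w -> okn w n.
Proof. by move=> ok j _; apply: ok. Qed.

Section Gen.
Variables (u : nat -> bool) (n : nat) (sk : nat -> bool).
Hypotheses (n0 : (0 < n)%N) (u0 : u 0%N = false) (okun : okn u n).
Let g := gen u n sk.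

Lemma g0 : g 0%N = false.
Proof. by rewrite /g gen_lt. Qed.

Lemma gcount j : (0 < j)%N -> (count_ones g j < j)%N.
Proof. by move=> j0; apply: cnt_lt_self => //; exact: g0. Qed.

Lemma g_okw : okw g.
Proof.
move=> j gj; case: (ltnP j n) => jn.
  have ag : forall k, (k < n)%N -> g k = u k by move=> k kn; rewrite /g gen_lt.
  have cj : count_ones g j = count_ones u j.
    by apply: eq_cnt => k kj; apply: ag; exact: ltn_trans kj jn.
  rewrite cj ag; last by apply: leq_ltn_trans (cnt_le _ _) jn.
  by apply: okun => //; rewrite -ag.
have j0 : (0 < j)%N by exact: leq_trans n0 jn.
move: gj; rewrite /g gen_ge // ?gcount //.
by case: (sk j) => // /eqP.
Qed.

Lemma g_pair j : (n <= j)%N -> sk j = false -> sk j.+1 = false -> g j || g j.+1.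
Proof.
move=> nj s1 s2; have j0 : (0 < j)%N by exact: leq_trans n0 nj.
case E: (g j) => //=.
have c1 : count_ones g j.+1 = count_ones g j by rewrite cntS E addn0.
have e1 := gen_ge u n sk j nj (gcount j j0).
have e2 := gen_ge u n sk j.+1 (leqW nj) (gcount j.+1 (ltn0Sn j)).
move: E; rewrite /g e1 s1 => /negbT E.
rewrite e2 s2 c1 oddS; move: E; case: (odd j); by case: (gen u n sk _).
Qed.

Hypothesis free : forall N, exists2 j, (N <= j)%N & sk j = false /\ sk j.+1 = false.

Lemma g_inf : infinitely_many_ones g.
Proof.
move=> N; have [j hj [s1 s2]] := free (maxn N n).
have nj : (n <= j)%N by exact: leq_trans (leq_maxr _ _) hj.
have Nj : (N <= j)%N by exact: leq_trans (leq_maxl _ _) hj.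
case/orP: (g_pair j nj s1 s2) => h; first by exists j.
by exists j.+1 => //; exact: leqW.
Qed.

Lemma g_W : Wset g.
Proof. by split; [exact: g_inf|exact: g_okw]. Qed.

End Gen.

Definition sks (s : nat -> bool) (j : nat) : bool :=
  ((j %% 4 == 1) || (j %% 4 == 2))%N && s (j %/ 4)%N.

Definition ws (s : nat -> bool) := gen (fun _ => false) 1 (sks s).

Lemma sks_free s N : exists2 j, (N <= j)%N & sks s j = false /\ sks s j.+1 = false.
Proof.
exists (4 * N + 3)%N; first lia.
have h1 : ((4 * N + 3) %% 4 = 3)%N by lia.
have h2 : ((4 * N + 3).+1 %% 4 = 0)%N by lia.
by rewrite /sks h1 h2.
Qed.

Lemma ws_W s : Wset (ws s).
Proof.
apply: g_W => //; last exact: sks_free.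
Qed.

Lemma ws_inj : injective ws.
Proof.
move=> s s' eq; apply/funext => m; apply/eqP; apply: contrapT => /negP neq.
wlog sm : s s' eq neq / s m = true.
  move=> H; case E: (s m); first exact: (H s s').
  by apply: (H s' s) => //; [rewrite eq_sym|move: neq; rewrite E; case: (s' m)].
have s'm : s' m = false by move: neq; rewrite sm; case: (s' m).
have a1 : ((4 * m + 1) %% 4 = 1)%N by lia.
have a2 : ((4 * m + 1) %/ 4 = m)%N by lia.
have a3 : ((4 * m + 1).+1 %% 4 = 2)%N by lia.
have a4 : ((4 * m + 1).+1 %/ 4 = m)%N by lia.
have z1 : ws s (4 * m + 1)%N = false.
  rewrite /ws gen_ge; [by rewrite /sks a1 a2 sm|lia|].
  by apply: cnt_lt_self; [exact: g0|lia].
have z2 : ws s (4 * m + 1).+1 = false.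
  rewrite /ws gen_ge; [by rewrite /sks a3 a4 sm|lia|].
  by apply: cnt_lt_self; [exact: g0|lia].
have := @g_pair (fun _ => false) 1 (sks s') isT erefl (4 * m + 1)%N.
rewrite -/(ws s') -eq z1 z2 /sks a1 a2 a3 a4 s'm andbF.
have nj : (1 <= 4 * m + 1)%N by lia.
by move=> /(_ nj erefl erefl).
Qed.

Lemma W_perfect w N : Wset w ->
  exists v, [/\ Wset v, v <> w & forall k, (k < N)%N -> v k = w k].
Proof.
move=> [hw ok]; set n := N.+1.
have w0 := okw_w0 w ok; have okn0 := okw_okn w n ok.
set g1 := gen w n (fun _ => false); set g2 := gen w n (fun j => (j < n.+2)%N).
have W1 : Wset g1.
  by apply: g_W => // M; exists M.
have W2 : Wset g2.
  apply: g_W => // M; exists (M + n.+2)%N; first exact: leq_addr.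
  by split; apply/negbTE; rewrite -leqNgt; lia.
have p1 : g1 n || g1 n.+1 by apply: g_pair.
have z2 : g2 n = false /\ g2 n.+1 = false.
  by split; rewrite /g2 gen_ge; [rewrite ifT //; lia|lia|apply: cnt_lt_self; [exact: g0|lia]
    |rewrite ifT //; lia|lia|apply: cnt_lt_self; [exact: g0|lia]].
have ag1 : forall k, (k < N)%N -> g1 k = w k by move=> k kN; rewrite /g1 gen_lt // ltnS ltnW.
have ag2 : forall k, (k < N)%N -> g2 k = w k by move=> k kN; rewrite /g2 gen_lt // ltnS ltnW.
case: (pselect (g1 = w)) => e1.
  exists g2; split => //; rewrite -e1 => e.
  by move: p1; rewrite -e; case: z2 => -> ->.
by exists g1.
Qed.

Fixpoint pn w n : nat := match n with 0%N => 0%N | m.+1 => (2 * pn w m + w m)%N end.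

Lemma pn_lt w n : (pn w n < 2 ^ n)%N.
Proof. elim: n => [|n IH] //=; rewrite expnS; case: (w n) => /=; lia. Qed.

Lemma pn_inj u v n : pn u n = pn v n -> forall k, (k < n)%N -> u k = v k.
Proof.
elim: n => [|n IH] //= e k.
have [e1 e2] : pn u n = pn v n /\ u n = v n.
  by move: e; case: (u n); case: (v n) => /=; lia.
rewrite ltnS leq_eqVlt => /orP [/eqP ->//|]; exact: IH.
Qed.

Lemma pn_eq u v n : (forall k, (k < n)%N -> u k = v k) -> pn u n = pn v n.
Proof.
elim: n => [|n IH] //= h; rewrite IH ?h // => k kn; apply: h; exact: ltnW.
Qed.

Section R4.
Variable R : realType.

Lemma ee_eq n : ee R n = ee R n.+1 * 2.
Proof. by rewrite eeS divfK. Qed.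

Lemma ps_pn w n : ps R w n = (pn w n)%:R * ee R n.
Proof.
elim: n => [|n IH]; first by rewrite ps0 mul0r.
rewrite psS IH /= ee_eq natrD natrM mulrDl; case: (w n) => /=; lra.
Qed.

Lemma ee_natE n : ee R n = ((2 ^ n)%:R)^-1.
Proof. by rewrite /ee natrX. Qed.

Lemma ee_small (e : R) : 0 < e -> exists N, ee R N < e.
Proof.
move=> e0; exists (Num.truncn (e^-1)).
set N := Num.truncn (e^-1).
have h1 : e^-1 < N.+1%:R by exact: truncnS_gt.
have h2 : (N.+1 <= 2 ^ N)%N by exact: ltn_expl.
have h3 : e^-1 < (2 ^ N)%:R by apply: lt_le_trans h1 _; rewrite ler_nat.
rewrite ee_natE -(invrK e) ltf_pV2 //; rewrite ?posrE ?invr_gt0 //.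
Qed.

Lemma nat_between (p q : nat) (y e : R) : 0 < e ->
  p%:R * e < y -> y < (p.+1)%:R * e ->
  q%:R * e <= y -> y <= (q.+1)%:R * e -> p = q.
Proof.
move=> e0 h1 h2 h3 h4; apply/eqP; rewrite eqn_leq; apply/andP; split.
  rewrite -ltnS -(ltr_nat R) -(ltr_pM2r e0); exact: lt_le_trans h1 h4.
rewrite -ltnS -(ltr_nat R) -(ltr_pM2r e0); exact: le_lt_trans h3 h2.
Qed.

End R4.

Section R5.
Variable R : realType.

Lemma W_not_dyadic w : Wset w -> ~ (@dyadics R) (bin_val w).
Proof.
move=> [hw ok] [k [n [xe _]]].
have [j nj wj] := hw n.
have lo := bin_val_gt_one R w n j nj wj.
have hi := bin_val_le R w n.
have e0 := ee_gt0 R n; have e1 := ee_gt0 R j.+1.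
have xe' : bin_val w = k%:R * ee R n by rewrite xe.
rewrite ps_pn xe' in lo hi.
have k1 : k = (pn w n).+1.
  apply/eqP; rewrite eqn_leq; apply/andP; split.
    by rewrite -(ler_nat R) -(ler_pM2r e0) -natr1 mulrDl mul1r.
  by rewrite -(ltr_nat R) -(ltr_pM2r e0); apply: lt_le_trans lo; rewrite ltrDl.
have ones : forall i, (n <= i)%N -> w i = true.
  move=> i ni; case E: (w i) => //; exfalso.
  have := bin_val_le_zero R w n i ni E; rewrite ps_pn xe' k1 -natr1 mulrDl mul1r.
  have := ee_gt0 R i.+1; lra.
have [m hm] := count_unbounded w hw n.
have nm : (n < m)%N by apply: leq_trans hm (cnt_le _ _).
have o1 := ok m (ones m (ltnW nm)).
have o2 := ok m.+1 (ones m.+1 (leqW (ltnW nm))).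
rewrite ones ?(ltnW hm) // in o1.
rewrite ones in o2; last first.
  by apply: leq_trans (ltnW hm) (cnt_mono _ _ _ (leqnSn m)).
by move: o2; rewrite oddS o1.
Qed.

Lemma FixR_sub01 : @FixR R `<=` `[0, 1]%classic.
Proof. by move=> x [h _]; rewrite /= in_itv /=. Qed.

Lemma closure_sub01 : closure (@FixR R) `<=` `[0, 1]%classic.
Proof.
rewrite [X in _ `<=` X](closure_id _).1; first exact: closureS FixR_sub01.
by apply: interval_closed.
Qed.

End R5.

Definition bb n k : bool := `[< exists u, okn u n /\ pn u n = k >].

Definition cnt n : nat := (\sum_(0 <= k < 2 ^ n) bb n k)%N.

Lemma okn_mono {u m n} : (m <= n)%N -> okn u n -> okn u m.
Proof. by move=> mn h j jm; apply: h; exact: leq_trans jm mn. Qed.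

Lemma pn2 u n : pn u n.+2 = (4 * pn u n + 2 * u n + u n.+1)%N.
Proof. by rewrite /=; lia. Qed.

Lemma bb_down n k r : (r < 4)%N -> bb n.+2 (4 * k + r) -> bb n k.
Proof.
move=> r4 /asboolP [u [ok e]]; apply/asboolP; exists u; split.
  exact: (okn_mono (leq_trans (leqnSn n) (leqnSn n.+1)) ok).
move: e; rewrite pn2; move: (leq_b1 (u n)) (leq_b1 (u n.+1)); lia.
Qed.

Lemma bb_excl n k : bb n.+2 (4 * k + 1) -> bb n.+2 (4 * k + 2) -> False.
Proof.
move=> /asboolP [u [ok e]] /asboolP [u' [ok' e']].
move: e e'; rewrite !pn2.
case E1: (u n); case E2: (u n.+1); case E3: (u' n); case E4: (u' n.+1) => /=;
  try lia.
move=> e e'.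
have pe : pn u n = pn u' n by lia.
have ag := pn_inj u u' n pe.
case: n ag ok ok' E1 E2 E3 E4 {e e' pe} => [|n] ag ok ok' E1 E2 E3 E4.
  by move: (ok' 0%N isT E3); rewrite cnt0 E3.
have u0 : u 0%N = false.
  by case E: (u 0%N) => //; move: (ok 0%N isT E); rewrite cnt0 E.
set c := count_ones u n.+1.
have cl : (c < n.+1)%N by apply: cnt_lt_self.
have o1 := ok n.+2 (ltnSn _) E2.
have o2 := ok' n.+1 (leqW (ltnSn _)) E3.
rewrite cntS E1 addn0 -/c in o1.
rewrite -(eq_cnt ag) -/c -ag // in o2.
by move: o1; rewrite oddS -o2; case: (odd _).
Qed.

Lemma sum4 (f : nat -> nat) N :
  (\sum_(0 <= i < 4 * N) f i = \sum_(0 <= k < N) (f (4 * k) + f (4 * k + 1) + f (4 * k + 2) + f (4 * k + 3)))%N.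
Proof.
elim: N => [|N IH]; first by rewrite muln0 !big_geq.
rewrite [RHS]big_nat_recr //= -IH.
have -> : (4 * N.+1 = (4 * N).+4)%N by lia.
do 4! rewrite big_nat_recr //=.
by rewrite !addn1 !addn2 !addn3 !addnA.
Qed.

Lemma cnt_step n : (cnt n.+2 <= 3 * cnt n)%N.
Proof.
rewrite /cnt !expnS mulnA -/(4) sum4 big_distrr /=.
apply: leq_sum => k _.
have h0 := @bb_down n k 0 isT; have h1 := @bb_down n k 1 isT.
have h2 := @bb_down n k 2 isT; have h3 := @bb_down n k 3 isT.
have hx := @bb_excl n k.
rewrite addn0 in h0.
case Ek: (bb n k).
  move: hx; case: (bb n.+2 (4 * k + 1)); case: (bb n.+2 (4 * k + 2)) => hx;
    try (by exfalso; apply: hx);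
  by case: (bb n.+2 (4 * k)); case: (bb n.+2 (4 * k + 3)).
have z0 : bb n.+2 (4 * k) = false by apply/negbTE/negP => /h0; rewrite Ek.
have z1 : bb n.+2 (4 * k + 1) = false by apply/negbTE/negP => /h1; rewrite Ek.
have z2 : bb n.+2 (4 * k + 2) = false by apply/negbTE/negP => /h2; rewrite Ek.
have z3 : bb n.+2 (4 * k + 3) = false by apply/negbTE/negP => /h3; rewrite Ek.
by rewrite z0 z1 z2 z3.
Qed.

Lemma cnt_bound m : (cnt (2 * m) <= 3 ^ m)%N.
Proof.
elim: m => [|m IH].
  by rewrite /cnt muln0 expn0 big_nat1; case: (bb _ _).
have -> : (2 * m.+1 = (2 * m).+2)%N by lia.
by apply: leq_trans (cnt_step _) _; rewrite expnS leq_mul2l IH orbT.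
Qed.

Lemma cnt_bound6 N : (cnt (6 * N) * 2 ^ N <= 2 ^ (6 * N))%N.
Proof.
have -> : (6 * N = 2 * (3 * N))%N by lia.
apply: leq_trans (leq_mul (cnt_bound _) (leqnn _)) _.
have e1 : (3 ^ (3 * N) = 27 ^ N)%N by rewrite expnM.
have e2 : (2 ^ (2 * (3 * N)) = 64 ^ N)%N by rewrite mulnA expnM.
rewrite e1 e2 -expnMn.
case: N {e1 e2} => [|N]; first by rewrite !expn0.
by rewrite leq_exp2r.
Qed.

Section R7.
Variable R : realType.

Definition JJ n k : set R :=
  if bb n k then `[k%:R * ee R n, k.+1%:R * ee R n]%classic else set0.

Lemma JJ_closed n k : closed (JJ n k).
Proof. by rewrite /JJ; case: (bb n k); [apply: interval_closed|exact: closed0]. Qed.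

Lemma FixR_cover n : @FixR R `<=` \big[setU/set0]_(k < 2 ^ n) JJ n k.
Proof.
rewrite FixRE => _ [w [hw ok] <-]; rewrite -bigcup_mkord.
exists (pn w n); first exact: pn_lt.
rewrite /JJ; have -> : bb n (pn w n) = true by apply/asboolP; exists w; split => //; exact: okw_okn.
rewrite /= in_itv /= -natr1 mulrDl mul1r -ps_pn.
by rewrite bin_val_ge bin_val_le.
Qed.

Lemma closure_cover n : closure (@FixR R) `<=` \big[setU/set0]_(k < 2 ^ n) JJ n k.
Proof.
rewrite [X in _ `<=` X](closure_id _).1; first exact: closureS (FixR_cover n).
by apply: closed_bigsetU => k _; exact: JJ_closed.
Qed.

Lemma closure_measurable : measurable (closure (@FixR R)).
Proof. by apply: closed_measurable; exact: closed_closure. Qed.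

Lemma JJ_measure n k : lebesgue_measure (JJ n k) = ((bb n k)%:R * ee R n)%:E.
Proof.
rewrite /JJ; case: (bb n k) => /=; last by rewrite measure0 mul0r.
rewrite lebesgue_measure_itv /= ifT; last first.
  by rewrite lte_fin ltr_pM2r ?ee_gt0 // ltr_nat.
by rewrite -EFinB -natr1 mulrDl mul1r addrAC subrr add0r.
Qed.

Lemma meas_bound n :
  (lebesgue_measure (closure (@FixR R)) <= ((cnt n)%:R * ee R n)%:E)%E.
Proof.
have hm : forall k, `I_(2 ^ n) k -> measurable (JJ n k).
  move=> k _; rewrite /JJ; case: (bb n k) => //; exact: measurable_itv.
apply: le_trans (content_subadditive (@lebesgue_measure R) hm closure_measurable (closure_cover n)) _.
rewrite (eq_bigr (fun k : 'I_(2 ^ n) => ((bb n k)%:R * ee R n)%:E)); last first.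
  by move=> k _; exact: JJ_measure.
rewrite sumEFin lee_fin /cnt -big_distrl /= natr_sum big_mkord.
by [].
Qed.

Lemma measure_zero : lebesgue_measure (closure (@FixR R)) = 0%E.
Proof.
apply/eqP; rewrite eq_le measure_ge0 andbT; apply/lee_addgt0Pr => e e0.
rewrite add0e; have [N hN] := ee_small R e e0.
apply: le_trans (meas_bound (6 * N)) _; rewrite lee_fin.
apply: le_trans (ltW hN); rewrite !ee_natE.
have h := cnt_bound6 N.
rewrite ler_pdivrMr ?ltr0n ?expn_gt0 // mulrC ler_pdivlMr ?ltr0n ?expn_gt0 //.
by rewrite -natrM ler_nat.
Qed.

End R7.

Section R8.
Variable R : realType.

Lemma ball_R (x y e : R) : ball x e y = (`|x - y| < e).
Proof. by rewrite -ball_normE. Qed.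

Lemma bin_val_close w v N : (forall k, (k < N)%N -> v k = w k) ->
  `|bin_val w - bin_val v| <= ee R N :> R.
Proof.
move=> ag; have pe : ps R v N = ps R w N by exact: ps_eq.
have h1 := bin_val_ge R w N; have h2 := bin_val_le R w N.
have h3 := bin_val_ge R v N; have h4 := bin_val_le R v N.
rewrite ler_norml; apply/andP; split; move: h1 h2 h3 h4; rewrite pe; lra.
Qed.

Lemma FixR_limit x : @FixR R x -> limit_point (@FixR R) x.
Proof.
rewrite FixRE => -[w hw <-] U /nbhs_ballP [e e0 hb].
have [N hN] := ee_small R e e0.
have [v [hv vw ag]] := W_perfect w N hw.
exists (bin_val v); split.
- apply/eqP => e1; apply: vw; apply: (bin_val_inj R) => //.
    by case: hv. by case: hw.
- by exists v.
- apply: hb; rewrite ball_R; apply: le_lt_trans hN.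
  exact: bin_val_close.
Qed.

Lemma limit_sub_closure (E : set R) : limit_point E `<=` closure E.
Proof. by move=> x hx B hB; have [y [_ Ey By]] := hx B hB; exists y. Qed.

Lemma perfect_closure : perfect_set (closure (@FixR R)).
Proof.
split; first exact: closed_closure.
apply/seteqP; split.
  rewrite [X in _ `<=` X](closure_id _).1; last exact: closed_closure.
  exact: limit_sub_closure.
move=> x hx U hU; have [a [Fa Ua]] := hx U hU.
case: (pselect (a = x)) => ax.
  subst a; have [y [yx Fy Uy]] := FixR_limit x Fa U hU.
  by exists y; split => //; exact: subset_closure.
by exists a; split => //; [apply/eqP|exact: subset_closure].
Qed.

Lemma compact_closure : compact (closure (@FixR R)).
Proof.
apply: (@subclosed_compact _ _ `[(0:R), 1]%classic).
- exact: closed_closure.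
- exact: segment_compact.
- exact: closure_sub01.
Qed.

Lemma FixR_nonempty : @FixR R !=set0.
Proof. by exists (bin_val (ws (fun _ => false))); rewrite FixRE; exists (ws (fun _ => false)) => //; exact: ws_W. Qed.

Lemma totdisc : totally_disconnected (closure (@FixR R)).
Proof.
move=> x Cx; apply/seteqP; split; last first.
  by move=> y -> /=; exists [set x] => //; split => //; [move=> z ->|exact: connected1].
move=> y [B [Bx BC Bconn] By] /=.
have Bint := (connected_intervalP B).1 Bconn.
apply: contrapT => yx.
have key : forall a c, a < c -> B a -> B c -> False.
  move=> a c ac Ba Bc.
  have sub : `[a, c]%classic `<=` closure (@FixR R).
    move=> z; rewrite /= in_itv /= => hz; apply: BC; exact: Bint Ba Bc z hz.
  have mI : `[a, c]%classic \in (measurable : set (set R)).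
    by rewrite inE; exact: measurable_itv.
  have mC : closure (@FixR R) \in (measurable : set (set R)).
    by rewrite inE; exact: closure_measurable.
  have : (lebesgue_measure `[a, c]%classic <= lebesgue_measure (closure (@FixR R)))%E.
    exact: (@le_measure _ _ _ (@lebesgue_measure R) _ _ mI mC sub).
  rewrite measure_zero lebesgue_measure_itv /= lte_fin ac.
  by rewrite lee_fin; lra.
case: (ltgtP x y) => h.
- exact: key h Bx By.
- exact: key h By Bx.
- by apply: yx.
Qed.

Lemma no_inj_cantor (h : (nat -> bool) -> nat) : ~ injective h.
Proof.
move=> hi.
pose G n := xget (fun _ => false) [set s | h s = n].
pose d n := ~~ G n n.
have : G (h d) = d.
  apply: hi; rewrite /G.
  exact: (@xgetPex _ (fun _ => false) [set s | h s = h d] (ex_intro _ d erefl)).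
move=> e; have e2 : G (h d) (h d) = d (h d) by rewrite e.
have e3 : d (h d) = ~~ G (h d) (h d) by [].
by move: e2; rewrite e3; case: (G (h d) (h d)).
Qed.

Lemma uncountable : ~ countable (@FixR R).
Proof.
move/countable_injP => [f fi].
apply: (no_inj_cantor (fun s => f (bin_val (ws s)))) => s s' e.
apply: ws_inj; apply: (bin_val_inj R); [by case: (ws_W s)|by case: (ws_W s')|].
apply: fi => //; rewrite inE FixRE; [exists (ws s)|exists (ws s')] => //; exact: ws_W.
Qed.

End R8.

Section R9.
Variable R : realType.

Fixpoint aa (x : R) (n : nat) : R :=
  match n with
  | 0%N => 0
  | m.+1 => if aa x m + ee R m.+1 <= x then aa x m + ee R m.+1 else aa x m
  end.

Definition dd (x : R) (n : nat) : bool := aa x n + ee R n.+1 <= x.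

Lemma ps_dd x n : ps R (dd x) n = aa x n.
Proof.
elim: n => [|n IH]; first by rewrite ps0.
rewrite psS IH /= /dd; case: ifP => _ /=; by rewrite ?mul1r ?mul0r ?addr0.
Qed.

Lemma aa_inv x n : 0 <= x < 1 -> aa x n <= x < aa x n + ee R n.
Proof.
move=> /andP [x0 x1]; elim: n => [|n IH]; first by rewrite /= ee0 add0r x0 x1.
have e := ee_eq R n; move: IH => /andP [h1 h2] /=.
case: ifP => h; apply/andP; split => //.
- by move: h2; rewrite e; lra.
- by move: h; move/negbT; rewrite -ltNge; lra.
Qed.

Lemma ee_mono m n : (m <= n)%N -> ee R n <= ee R m.
Proof.
elim: n => [|n IH]; first by rewrite leqn0 => /eqP ->.
rewrite leq_eqVlt => /orP [/eqP ->//|]; rewrite ltnS => /IH h.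
apply: le_trans h; rewrite eeS; have := ee_gt0 R n; lra.
Qed.

Lemma eq_of_close (x y : R) : (forall n, `|x - y| <= ee R n) -> x = y.
Proof.
move=> h; apply/eqP; rewrite -subr_eq0 -normr_eq0; apply/eqP.
apply: contrapT => /eqP ne; have pos : 0 < `|x - y| by rewrite lt_def ne normr_ge0.
have [N hN] := ee_small R _ pos; have := h N; lra.
Qed.

Lemma closure_minus (x : R) : closure (@FixR R) x -> ~ @FixR R x -> (@dyadics R) x.
Proof.
move=> cx nfx; apply: contrapT => nd.
have := closure_sub01 R x cx; rewrite /= in_itv /= => /andP [x0 x1].
have xn0 : x != 0.
  apply/eqP => e; apply: nd; exists 0%N, 0%N; rewrite e mul0r; split => //.
  by rewrite lexx ler01.
have xn1 : x != 1.
  apply/eqP => e; apply: nd; exists 1%N, 0%N; rewrite e expr0 divr1; split => //.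
  by rewrite ler01 lexx.
have x01 : 0 <= x < 1 by rewrite x0 lt_neqAle xn1 x1.
set d := dd x.
have inv n := aa_inv x n x01.
have aadyad n : aa x n = (pn d n)%:R / 2 ^+ n by rewrite -ps_dd ps_pn.
have alt n : aa x n < x.
  rewrite lt_neqAle; case/andP: (inv n) => -> _; rewrite andbT.
  apply/eqP => e; apply: nd; exists (pn d n), n; split; first by rewrite -e aadyad.
  by rewrite -e; case/andP: (inv n) => h _; rewrite (le_trans h) // -ps_dd ps_ge0.
have xv : x = bin_val d.
  apply: eq_of_close => n.
  have h1 := bin_val_ge R d n; have h2 := bin_val_le R d n.
  rewrite ps_dd in h1 h2; case/andP: (inv n) => h3 h4.
  by rewrite ler_norml; apply/andP; split; lra.
have dinf : infinitely_many_ones d.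
  move=> N; apply: contrapT => hN.
  have z : forall n, (N <= n)%N -> d n = false.
    move=> n Nn; case E: (d n) => //; exfalso; apply: hN; by exists n.
  have ca : forall t, aa x (N + t) = aa x N.
    elim=> [|t IH]; first by rewrite addn0.
    by rewrite addnS /= -/(dd x (N + t)) -/d z ?leq_addr // IH.
  have pos : 0 < x - aa x N by rewrite subr_gt0.
  have [M hM] := ee_small R _ pos.
  case/andP: (inv (N + M)%N) => _; rewrite ca => h.
  have := ee_mono _ _ (leq_addl N M); lra.
have dok : okw d.
  move=> j dj; apply: contrapT => bad.
  set n := j.+1.
  have hI : nbhs x `](aa x n), (aa x n + ee R n)[%classic.
    apply: open_nbhs_nbhs; split; first exact: itv_open.
    have := alt n; have := inv n; rewrite /= in_itv /= => /andP [_ h2] h1; by apply/andP.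
  have [y [Fy Iy]] := cx _ hI.
  move: Fy; rewrite FixRE => -[v [hv okv] yv].
  move: Iy; rewrite /= in_itv /= -yv => /andP [y1 y2].
  have e0 := ee_gt0 R n.
  have pe : pn d n = pn v n.
    apply: (nat_between R (pn d n) (pn v n) (bin_val v) (ee R n) e0).
    - by rewrite -ps_pn ps_dd.
    - by rewrite -natr1 mulrDl mul1r -ps_pn ps_dd.
    - by rewrite -ps_pn; exact: bin_val_ge.
    - by rewrite -natr1 mulrDl mul1r -ps_pn; exact: bin_val_le.
  have ag := pn_inj d v n pe.
  have vj : v j = true by rewrite -ag.
  have cj : count_ones d j = count_ones v j.
    by apply: eq_cnt => k kj; apply: ag; exact: ltn_trans kj (ltnSn j).
  have := okv j vj; rewrite -cj.
  rewrite -ag; last by apply: leq_ltn_trans (cnt_le _ _) (ltnSn j).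
  by move=> e; apply: bad.
by apply: nfx; rewrite FixRE xv; exists d.
Qed.

End R9.

Theorem proposition6p6 (R : realType) :
  [/\ ~ countable (@FixR R),
      @FixR R `<=` `[0, 1]%classic `\` @dyadics R,
      cantor_set (closure (@FixR R)),
      (lebesgue_measure (closure (@FixR R)) = 0)%E
    & closure (@FixR R) `\` @FixR R `<=` @dyadics R].
Proof.
split.
- exact: uncountable.
- move=> x Fx; split; first exact: FixR_sub01.
  move: Fx; rewrite FixRE => -[w hw <-]; exact: W_not_dyadic.
- split.
  + have [x Fx] := FixR_nonempty R; exists x; exact: subset_closure.
  + exact: compact_closure.
  + exact: perfect_closure.
  + exact: totdisc.
- exact: measure_zero.
- by move=> x [cx nfx]; exact: closure_minus.
Qed.
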